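(* Let $(M,d)$ be a pointed metric space and $f\in\mathrm{Lip}_0(M,M)$ such that $R_{\widehat f}$ has nonempty interior in $\mathcal F(M)$. Then for every nonempty finite set $N\subset M$ there is an increasing sequence $(n(j))_j\subset\mathbb N$ such that $f^{n(j)}(x)\to x$ as $j\to\infty$ for all $x\in N$. In particular $R_f=M$.
   Context: A pointed metric space is a metric space $(M,d)$ with a distinguished point $0$. $\mathrm{Lip}_0(M,M)$ denotes the Lipschitz maps $f:M\to M$ with $f(0)=0$; $\mathrm{Lip}_0(M)$ the real-valued Lipschitz functions vanishing at $0$, normed by the Lipschitz constant. $\delta:M\to\mathrm{Lip}_0(M)^*$, $\delta(x)(\varphi)=\varphi(x)$; $\mathcal F(M)$ is the norm-closed linear span of $\delta(M)$ in $\mathrm{Lip}_0(M)^*$. $\widehat f$ is the unique bounded linear operator on $\mathcal F(M)$ with $\widehat f(\delta(x))=\delta(f(x))$. For a self-map $g$ of a metric space (for an operator, with norm distance), $R_g=\{x:\liminf_{n\to\infty} d(x,g^n(x))=0\}$. *)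

(* Defs.v *)
From HB Require Import structures.
From mathcomp Require Import all_boot all_order all_algebra.
From mathcomp Require Import all_classical all_reals all_analysis.
Set Implicit Arguments. Unset Strict Implicit. Unset Printing Implicit Defensive.
Import Order.TTheory GRing.Theory Num.Theory.
Local Open Scope classical_set_scope.
Local Open Scope ring_scope.

Section LipFree.
Variables (R : realType) (M : Type) (d : M -> M -> R).

Definition is_metric : Prop :=
  [/\ forall x y, d x y = 0 <-> x = y,
      forall x y, d x y = d y x &
      forall x y z, d x z <= d x y + d y z].

Variable pt : M.

Definition lip0_self (f : M -> M) : Prop :=
  f pt = pt /\ exists L : R, forall x y, d (f x) (f y) <= L * d x y.

Definition lip0 (phi : M -> R) : Prop :=
  phi pt = 0 /\ exists L : R, forall x y, `|phi x - phi y| <= L * d x y.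

Definition lip0_ball (phi : M -> R) : Prop :=
  phi pt = 0 /\ forall x y, `|phi x - phi y| <= d x y.

(* Functionals on Lip_0(M) are represented as maps (M -> R) -> R; only their
   values on Lip_0(M) matter. Dual-norm distance (in \bar R). *)
Definition fdist (Phi Psi : (M -> R) -> R) : \bar R :=
  ereal_sup [set (`|Phi phi - Psi phi|)%:E | phi in lip0_ball].

Definition lin_on_lip0 (Phi : (M -> R) -> R) : Prop :=
  forall (a b : R) (phi psi : M -> R), lip0 phi -> lip0 psi ->
    Phi (fun x => a * phi x + b * psi x) = a * Phi phi + b * Phi psi.

Definition delta (x : M) : (M -> R) -> R := fun phi => phi x.

Definition molecule (s : seq (R * M)) : (M -> R) -> R :=
  fun phi => \sum_(p <- s) p.1 * delta p.2 phi.

(* F(M): norm-closure of span delta(M) inside Lip_0(M)^* *)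
Definition free_space : set ((M -> R) -> R) :=
  [set Phi | lin_on_lip0 Phi /\
    forall e : R, 0 < e -> exists s, (fdist Phi (molecule s) < e%:E)%E].

(* \widehat f : F(M) -> F(M), hat f (delta x) = delta (f x); it is the
   restriction of the adjoint of the composition operator phi |-> phi o f. *)
Definition fhat (f : M -> M) (Phi : (M -> R) -> R) : (M -> R) -> R :=
  fun phi => Phi (phi \o f).

Definition recM (g : M -> M) : set M :=
  [set x | limn_einf (fun n => (d x (iter n g x))%:E) = 0%E].

Definition rec_fhat (f : M -> M) : set ((M -> R) -> R) :=
  [set Phi | free_space Phi /\
    limn_einf (fun n => fdist Phi (iter n (fhat f) Phi)) = 0%E].

Definition nonempty_interior_in_free (A : set ((M -> R) -> R)) : Prop :=
  exists Phi0, free_space Phi0 /\ exists r : R, 0 < r /\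
    forall Phi, free_space Phi -> (fdist Phi Phi0 < r%:E)%E -> A Phi.

End LipFree.

(* Main.v *)
Require Import Defs.
From HB Require Import structures.
From mathcomp Require Import all_boot all_order all_algebra.
From mathcomp Require Import all_classical all_reals all_analysis.
From mathcomp Require Import ring lra.
Import Order.TTheory GRing.Theory Num.Theory.
Local Open Scope classical_set_scope.
Local Open Scope ring_scope.
Set Implicit Arguments. Unset Strict Implicit.

Section Basic.
Variables (R : realType) (M : Type) (d : M -> M -> R) (pt : M).
Hypothesis Hm : is_metric d.

Lemma d_refl x : d x x = 0.
Proof. by case: Hm => H _ _; apply H. Qed.
Lemma d_sym x y : d x y = d y x.
Proof. by case: Hm. Qed.
Lemma d_tri x y z : d x z <= d x y + d y z.
Proof. by case: Hm. Qed.
Lemma d_ge0 x y : 0 <= d x y.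
Proof.
have := d_tri x y x; rewrite d_refl (d_sym y x) => h.
have : 0 <= d x y + d x y by [].
lra.
Qed.
Lemma d_eq0 x y : d x y = 0 -> x = y.
Proof. by case: Hm => H _ _; apply H. Qed.

Lemma d_diff x y z : `|d x z - d y z| <= d x y.
Proof.
have h1 := d_tri x y z; have h2 := d_tri y x z; rewrite (d_sym y x) in h2.
rewrite ler_norml; apply/andP; split; lra.
Qed.

Lemma norm_aux (X Y : R) : -Y <= X <= Y -> (-Y <= X <= Y -> -`|Y| <= X <= `|Y|).
Proof. move=> _; have := ler_norm Y; have := ler_norm (- Y); rewrite normrN; lra. Qed.

Lemma lip_min (c a a' : R) : `|Num.min c a - Num.min c a'| <= `|a - a'|.
Proof.
rewrite ler_norml; have h1 := ler_norm (a - a'); have h2 := ler_norm (a' - a).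
rewrite distrC in h2.
case: (leP c a) => h3; case: (leP c a') => h4.
all: lra. Qed.

Lemma lip_max (c a a' : R) : `|Num.max c a - Num.max c a'| <= `|a - a'|.
Proof.
rewrite ler_norml; have h1 := ler_norm (a - a'); have h2 := ler_norm (a' - a).
rewrite distrC in h2.
case: (leP c a) => h3; case: (leP c a') => h4.
- lra.
- lra.
- lra.
- lra.
Qed.

Lemma clamp_lip (c b u v : R) :
  `|Num.min c (Num.max 0 (b - u)) - Num.min c (Num.max 0 (b - v))| <= `|u - v|.
Proof.
apply: (le_trans (lip_min _ _ _)); apply: (le_trans (lip_max _ _ _)).
have -> : b - u - (b - v) = v - u by ring.
by rewrite distrC.
Qed.

End Basic.

Section Free.
Variables (R : realType) (M : Type) (d : M -> M -> R) (pt : M).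
Hypothesis Hm : is_metric d.

Lemma zero_ball : lip0_ball d pt (fun _ => 0).
Proof. by split => // x y; rewrite subrr normr0 d_ge0. Qed.

Lemma fdist_ub Phi Psi phi : lip0_ball d pt phi ->
  (`|Phi phi - Psi phi|%:E <= fdist d pt Phi Psi)%E.
Proof. by move=> h; apply: ereal_sup_ubound; exists phi. Qed.

Lemma fdist_le Phi Psi (c : R) :
  (forall phi, lip0_ball d pt phi -> `|Phi phi - Psi phi| <= c) ->
  (fdist d pt Phi Psi <= c%:E)%E.
Proof. by move=> h; apply: ge_ereal_sup => _ [phi hphi <-]; rewrite lee_fin h. Qed.

Lemma fdist_ge0 Phi Psi : (0%:E <= fdist d pt Phi Psi)%E.
Proof.
apply: le_trans (fdist_ub Phi Psi zero_ball); by rewrite lee_fin.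
Qed.

Lemma iter_fhat (f : M -> M) n (Phi : (M -> R) -> R) phi :
  iter n (fhat f) Phi phi = Phi (fun w => phi (iter n f w)).
Proof.
elim: n phi => [//|n IH] phi /=.
by rewrite /fhat IH.
Qed.

Lemma molecule_mkseq (g : nat -> R * M) K phi :
  molecule (mkseq g K) phi = \sum_(k < K) (g k).1 * phi (g k).2.
Proof.
rewrite /molecule /mkseq big_map.
rewrite -(big_mkord xpredT (fun k => (g k).1 * delta (g k).2 phi)).
by rewrite /index_iota subn0.
Qed.

Lemma molecule_lin (s : seq (R * M)) : lin_on_lip0 d pt (molecule s).
Proof.
move=> a b phi psi _ _; rewrite /molecule /delta.
rewrite !mulr_sumr -big_split /=; apply: eq_bigr => p _; ring.
Qed.

Lemma molecule_free (s : seq (R * M)) : free_space d pt (molecule s).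
Proof.
split; first exact: molecule_lin.
move=> e e0; exists s; apply: le_lt_trans (_ : 0%:E < e%:E)%E; last by rewrite lte_fin.
by apply: fdist_le => phi _; rewrite subrr normr0.
Qed.
End Free.

Lemma pigeon (R : realType) (K : nat) (e : 'I_K -> R) (del : R) : 0 < del ->
  exists i : 'I_K.+1, forall k,
    ~~ ((i%:R * del < e k) && (e k < i.+1%:R * del)).
Proof.
move=> del0.
case: (boolP [exists i : 'I_K.+1, [forall k, ~~ ((i%:R * del < e k) && (e k < i.+1%:R * del))]]).
  by move=> /existsP [i /forallP h]; exists i.
move=> hn; exfalso.
have : forall i : 'I_K.+1, exists k, (i%:R * del < e k) && (e k < i.+1%:R * del).
  move=> i; move: hn; rewrite negb_exists => /forallP /(_ i).
  by rewrite negb_forall => /existsP [k]; rewrite negbK => hk; exists k.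
move=> /fin_all_exists [g hg].
have inj : injective g.
  move=> i j eq; move: (hg i) (hg j); rewrite eq => /andP[h1 h2] /andP[h3 h4].
  have l1 : (i%:R * del < j.+1%:R * del) by apply: lt_trans h1 h4.
  have l2 : (j%:R * del < i.+1%:R * del) by apply: lt_trans h3 h2.
  rewrite ltr_pM2r // ltr_nat ltnS in l1.
  rewrite ltr_pM2r // ltr_nat ltnS in l2.
  by apply/val_inj/eqP; rewrite eqn_leq l1 l2.
by have := leq_card g inj; rewrite !card_ord ltnn.
Qed.

Section Core.
Variables (R : realType) (M : Type) (d : M -> M -> R) (pt : M) (f : M -> M).
Hypothesis Hm : is_metric d.

Lemma core (a : nat -> R) (y : nat -> M) (K : nat) (x : M) (n : nat)
  (eta rho0 sigma : R) :
  0 < eta -> eta <= rho0 -> rho0 <= d pt x ->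
  (forall k, (k < K)%N -> y k <> x -> rho0 <= d (y k) x) ->
  (forall J : {set 'I_K}, (forall k, k \in J -> y k <> x) ->
     sigma <= `| \sum_(k in J) a k - \sum_(k < K | `[< y k = x >]) a k |) ->
  eta <= d (iter n f x) x ->
  ((eta / K.+1%:R * sigma)%:E <=
     fdist d pt (molecule (mkseq (fun k => (a k, y k)) K))
       (iter n (fhat f) (molecule (mkseq (fun k => (a k, y k)) K))))%E.
Proof.
move=> eta0 etarho rhopt rhoy hsig hfar.
set del := eta / K.+1%:R.
have del0 : 0 < del by rewrite /del divr_gt0 // ltr0n.
have [i hi] := pigeon (fun k : 'I_K => d (iter n f (y k)) x) del0.
set al := i%:R * del; set be := i.+1%:R * del.
have al0 : 0 <= al by rewrite /al mulr_ge0 // ltW.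
have beal : be = al + del by rewrite /be /al -addn1 natrD mulrDl mul1r.
have beeta : be <= eta.
  rewrite /be /del mulrA ler_pdivrMr ?ltr0n // mulrC ler_pM2l // ler_nat.
  by have := ltn_ord i.
pose phi := fun w => Num.min del (Num.max 0 (be - d w x)).
have phi_hi w : be <= d w x -> phi w = 0.
  move=> h; rewrite /phi (_ : Num.max 0 (be - d w x) = 0).
    by apply/min_r/ltW.
  by apply/max_l; rewrite subr_le0.
have phi_lo w : d w x <= al -> phi w = del.
  move=> h; rewrite /phi (_ : Num.max 0 (be - d w x) = be - d w x).
    by apply/min_l; rewrite beal; lra.
  apply/max_r; rewrite subr_ge0 beal; have := d_ge0 Hm w x; lra.
have phib : lip0_ball d pt phi.
  split; first by apply: phi_hi; apply: le_trans rhopt; apply: le_trans etarho.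
  move=> w w'; apply: le_trans (clamp_lip _ _ _ _) _.
  exact: d_diff.
have h1 := fdist_ub (molecule (mkseq (fun k => (a k, y k)) K))
    (iter n (fhat f) (molecule (mkseq (fun k => (a k, y k)) K))) phib.
apply: le_trans h1; rewrite lee_fin.
rewrite iter_fhat !molecule_mkseq /=.
set J := ([set k : 'I_K | d (iter n f (y k)) x <= al])%SET.
have eA : \sum_(k < K) a k * phi (y k) = (\sum_(k < K | `[< y k = x >]) a k) * del.
  rewrite mulr_suml [RHS]big_mkcond /=; apply: eq_bigr => k _.
  case: asboolP => [->|hne]; first by rewrite phi_lo // d_refl.
  rewrite phi_hi ?mulr0 //; apply: le_trans (rhoy _ (ltn_ord k) hne).
  by apply: le_trans etarho.
have eB : \sum_(k < K) a k * phi (iter n f (y k)) = (\sum_(k in J) a k) * del.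
  rewrite mulr_suml [RHS]big_mkcond /=; apply: eq_bigr => k _.
  case: ifP; rewrite ?inE => hk; first by rewrite phi_lo.
  move: (hi k); rewrite negb_and -!leNgt => /orP [h|h].
    by move: hk; rewrite /J (_ : (d (iter n f (y k)) x <= al) = true).
  by rewrite phi_hi ?mulr0.
rewrite eA eB -mulrBl normrM (gtr0_norm del0) [X in _ <= X]mulrC ler_pM2l // distrC.
apply: hsig => k; rewrite inE => hk hyk.
move: hk; rewrite hyk => hk.
have : be <= al by apply: le_trans beeta (le_trans hfar hk).
rewrite beal; lra.
Qed.
End Core.

Section Seqs.
Variable R : realType.
Local Open Scope ereal_scope.

Lemma einfs_lim (u : (\bar R)^nat) : limn_einf u = ereal_sup (range (einfs u)).
Proof. by rewrite limn_einf_lim; apply/cvg_lim => //; exact: cvg_einfs_sup. Qed.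

Lemma einf0_small (u : (\bar R)^nat) : limn_einf u = 0 ->
  forall e : R, (0 < e)%R -> forall N0, exists n, (N0 <= n)%N /\ u n < e%:E.
Proof.
move=> h e e0 N0.
have : einfs u N0 < e%:E.
  apply: le_lt_trans (_ : 0 < e%:E); last by rewrite lte_fin.
  by rewrite -h einfs_lim; apply: ereal_sup_ubound; exists N0.
rewrite /einfs /= => /ereal_inf_lt [_ [k /= hk <-] hlt].
by exists k.
Qed.

Lemma homo_ge (n : nat -> nat) : {homo n : i j / (i < j)%N >-> (i < j)%N} ->
  forall j, (j <= n j)%N.
Proof.
move=> hom; elim => [//|j IH].
by apply: leq_ltn_trans IH (hom _ _ (ltnSn j)).
Qed.

Lemma einf_from_sub (v : nat -> R) (n : nat -> nat) :
  (forall k, (0 <= v k)%R) ->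
  {homo n : i j / (i < j)%N >-> (i < j)%N} ->
  (fun j => v (n j)) @ \oo --> 0%R ->
  limn_einf (fun k => (v k)%:E) = 0.
Proof.
move=> v0 hom hc; rewrite einfs_lim; apply/eqP; rewrite eq_le; apply/andP; split.
  apply: ge_ereal_sup => _ [k _ <-].
  apply/lee_addgt0Pr => e e0; rewrite add0e.
  have [J _ HJ] := (cvgrPdist_lt _ _).1 hc e e0.
  have hj := HJ (maxn J k) (leq_maxl J k); rewrite /= sub0r normrN in hj.
  apply: le_trans (_ : (v (n (maxn J k)))%:E <= e%:E); last first.
    by rewrite lee_fin; apply: le_trans (ltW hj); apply: ler_norm.
  rewrite /einfs /=; apply: ereal_inf_lbound; exists (n (maxn J k)) => //=.
  by apply: leq_trans (homo_ge hom _); apply: leq_maxr.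
have h0 : 0 <= einfs (fun k => (v k)%:E) 0%N.
  by rewrite /einfs /=; apply: le_ereal_inf_tmp => _ [k _ <-]; rewrite lee_fin.
by apply: le_trans h0 _; apply: ereal_sup_ubound; exists 0%N.
Qed.

Fixpoint bseq (g : nat * nat -> nat) (j : nat) : nat :=
  match j with 0 => g (0, 0)%N | j'.+1 => g (j, (bseq g j').+1) end.

Lemma build_seq (P : nat -> nat -> Prop) :
  (forall j N0, exists n, (N0 <= n)%N /\ P j n) ->
  exists s : nat -> nat, {homo s : i j / (i < j)%N >-> (i < j)%N} /\
     forall j, P j (s j).
Proof.
move=> h.
have h' : forall jN : nat * nat, exists n, (jN.2 <= n)%N /\ P jN.1 n.
  by move=> [j N0]; apply: h.
have [g hg] := choice h'.
exists (bseq g); split.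
  apply: homo_ltn; first by move=> a b c; apply: ltn_trans.
  by move=> i /=; have [] := hg (i.+1, (bseq g i).+1).
by case => [|j] /=; [have [] := hg (0, 0)%N | have [] := hg (j.+1, (bseq g j).+1)].
Qed.

End Seqs.

Lemma fin_lb (R : realType) (T : finType) (P : pred T) (v : T -> R) :
  (forall t, P t -> 0 < v t) -> exists r, 0 < r /\ forall t, P t -> r <= v t.
Proof.
move=> h; exists (\big[Order.min/1]_(t | P t) v t); split.
  by apply: lt_bigmin => //; apply: ltr01.
by move=> t pt; apply: bigmin_le_cond.
Qed.

Lemma sum_pow2_lt n (P : pred nat) : (\sum_(i < n | P i) 2 ^ i < 2 ^ n)%N.
Proof.
elim: n => [|n IH]; first by rewrite big_ord0.
rewrite big_mkcond big_ord_recr /= -big_mkcond expnS.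
case: (P n); last by rewrite addn0 (leq_trans IH) // leq_pmull.
by rewrite mul2n -addnn ltn_add2r.
Qed.

Lemma bin q (P : pred nat) i0 : (i0 < q)%N -> ~~ P i0 ->
  (\sum_(i < q | P i) 2 ^ i != 2 ^ i0)%N.
Proof.
move=> i0q nP.
case: (boolP [exists i : 'I_q, P i && (i0 < i)%N]).
  move=> /existsP [i /andP [Pi hi]].
  rewrite (bigD1 i) //= neq_ltn; apply/orP; right.
  apply: (@leq_trans (2 ^ i)); last by apply: leq_addr.
  by rewrite ltn_exp2l.
rewrite negb_exists => /forallP h.
rewrite neq_ltn; apply/orP; left.
rewrite (eq_bigl (fun i : 'I_q => P i && (i < i0)%N)); last first.
  move=> i; case Pi: (P i) => //=.
  have := h i; rewrite Pi /= -leqNgt leq_eqVlt => /orP [/eqP e|//].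
  by move: nP; rewrite -e Pi.
rewrite -(big_ord_widen_cond q) ?(ltnW i0q) //.
exact: sum_pow2_lt.
Qed.

Section Main.
Variables (R : realType) (M : Type) (d : M -> M -> R) (pt : M) (f : M -> M).
Hypothesis Hm : is_metric d.
Hypothesis Hf : lip0_self d pt f.
Hypothesis Hint : nonempty_interior_in_free d pt (rec_fhat d pt f).

Lemma iter_pt n : iter n f pt = pt.
Proof. by elim: n => //= n ->; case: Hf. Qed.

Lemma part1 (N : set M) : finite_set N -> N !=set0 ->
  exists n : nat -> nat, {homo n : i j / (i < j)%N >-> (i < j)%N} /\
       forall x, N x -> (fun j => d (iter (n j) f x) x) @ \oo --> 0.
Proof.
move=> hfin hne.
have [Phi0 [hPhi0 [r [r0 hball]]]] := Hint.
have [s hs] := (finite_seqP (N : set {classic M})).1 hfin.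
pose nl := undup s.
have nlu : uniq nl := undup_uniq s.
have hN : forall x, N x -> (x : {classic M}) \in nl.
  by move=> x; rewrite hs /= mem_undup.
have [s0 hs0] := hPhi0.2 (r / 2) (ltac:(by rewrite divr_gt0)).
pose p := size s0.
pose q := size nl.
pose a0 k := (nth (0, pt) s0 k).1.
pose y0 k := (nth (0, pt) s0 k).2.
pose S := \sum_(i < q) 2%:R ^+ i * d (nth pt nl i) pt.
have S0 : 0 <= S by apply: sumr_ge0 => i _; rewrite mulr_ge0 ?exprn_ge0 ?ler0n ?d_ge0.
pose A (i0 : 'I_q) (J : {set 'I_(p + q)}) :=
  \sum_(k < p | lshift q k \in J) a0 k - \sum_(k < p | `[< y0 k = nth pt nl i0 >]) a0 k.
pose C (i0 : 'I_q) (J : {set 'I_(p + q)}) :=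
  \sum_(i < q | rshift p i \in J) 2%:R ^+ i - 2%:R ^+ i0 : R.
have hpos : forall z : ('I_q * {set 'I_(p + q)})%type, A z.1 z.2 != 0 ->
    0 < `|A z.1 z.2| / (`|C z.1 z.2| + 1).
  by move=> z hz; rewrite divr_gt0 ?normr_gt0 // ltr_wpDl // ltr01.
have [t0 [t00 ht0]] := fin_lb hpos.
pose t := Num.min t0 (r / 4 / (S + 1)).
have t0' : 0 < t by rewrite lt_min t00 /= !divr_gt0 // ltr_wpDl // ltr01.
have tt0 : t <= t0 by rewrite /t ge_min lexx.
have tS : t * S <= r / 4.
  have h1 : t <= r / 4 / (S + 1) by rewrite /t ge_min lexx orbT.
  apply: le_trans (ler_wpM2r S0 h1) _.
  rewrite mulrAC ler_pdivrMr ?ltr_wpDl ?ltr01 //.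
  apply: ler_wpM2l; first by rewrite ltW // divr_gt0.
  by rewrite lerDl ler01.
pose a k := if (k < p)%N then a0 k else t * 2%:R ^+ (k - p).
pose y k := if (k < p)%N then y0 k else nth pt nl (k - p).
have ea1 (k : 'I_p) : a (lshift q k) = a0 k /\ y (lshift q k) = y0 k.
  by rewrite /a /y /= ltn_ord.
have ea2 (i : 'I_q) : a (rshift p i) = t * 2%:R ^+ i /\ y (rshift p i) = nth pt nl i.
  by rewrite /a /y /= ltnNge leq_addr /= addKn.
pose Phi := molecule (mkseq (fun k => (a k, y k)) (p + q)).
have ePhi phi : Phi phi = molecule s0 phi + \sum_(i < q) t * 2%:R ^+ i * phi (nth pt nl i).
  rewrite /Phi molecule_mkseq big_split_ord /=.
  rewrite -{1}(mkseq_nth (0, pt) s0) molecule_mkseq; congr (_ + _).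
    by apply: eq_bigr => k _; case: (ea1 k) => -> ->.
  by apply: eq_bigr => i _; case: (ea2 i) => -> ->.
have [D hD hDr] : exists2 D, fdist d pt Phi0 (molecule s0) = D%:E & D < r / 2.
  move: (fdist_ge0 pt Hm Phi0 (molecule s0)) hs0.
  case: (fdist d pt Phi0 (molecule s0)) => [D||] //= _ h.
  by exists D => //; rewrite lte_fin in h.
have hfd : (fdist d pt Phi Phi0 < r%:E)%E.
  apply: le_lt_trans (fdist_le (c := D + r / 4) _) _; last by rewrite lte_fin; lra.
  move=> phi hphi.
  have h1 := fdist_ub Phi0 (molecule s0) hphi; rewrite hD lee_fin in h1.
  rewrite ePhi.
  have hU : `|\sum_(i < q) t * 2%:R ^+ i * phi (nth pt nl i)| <= r / 4.
    apply: le_trans (ler_norm_sum _ _ _) _; apply: le_trans tS.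
    rewrite /S mulr_sumr; apply: ler_sum => i _.
    rewrite normrM mulrA ger0_norm; last by rewrite mulr_ge0 ?exprn_ge0 ?ler0n ?ltW.
    apply: ler_wpM2l; first by rewrite mulr_ge0 ?exprn_ge0 ?ler0n ?ltW.
    by case: hphi => hp0 hl; have := hl (nth pt nl i) pt; rewrite hp0 subr0.
  have -> : molecule s0 phi + \sum_(i < q) t * 2%:R ^+ i * phi (nth pt nl i) - Phi0 phi
     = - (Phi0 phi - molecule s0 phi) + \sum_(i < q) t * 2%:R ^+ i * phi (nth pt nl i).
    by rewrite opprB addrAC.
  apply: le_trans (ler_normD _ _) _; rewrite normrN; lra.
have hrec := hball Phi (molecule_free d pt _) hfd.
have hex : forall j N0, exists n, (N0 <= n)%N /\
    (fdist d pt Phi (iter n (fhat f) Phi) < (j.+1%:R^-1)%:E)%E.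
  by move=> j N0; apply: (einf0_small hrec.2); rewrite invr_gt0 ltr0n.
have [nseq [hom hP]] := build_seq hex.
exists nseq; split => // x Nx.
apply/cvgrPdist_lt => e e0.
have [->|xpt] := pselect (x = pt).
  by exists 0%N => // j _ /=; rewrite iter_pt d_refl // subr0 normr0.
have xnl := hN x Nx.
have i0q : (index (x : {classic M}) nl < q)%N by rewrite index_mem.
pose i0 := Ordinal i0q.
have nthx : nth pt nl i0 = x by exact: (nth_index (pt : {classic M}) xnl).
have uniq_i (i : 'I_q) : nth pt nl i = x -> i = i0.
  by move=> h; apply: val_inj => /=; rewrite -h (index_uniq (pt : {classic M})).
have hpos1 : forall k : 'I_(p + q), `[< y k <> x >] -> 0 < d (y k) x.
  move=> k /asboolP hk; rewrite lt_def d_ge0 // andbT; apply/eqP => h.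
  exact: hk (d_eq0 Hm h).
have [r1 [r10 hr1]] := fin_lb hpos1.
have dptx : 0 < d pt x.
  rewrite lt_def d_ge0 // andbT; apply/eqP => h.
  by apply: xpt; apply: esym; exact: (d_eq0 Hm h).
pose rho0 := Num.min r1 (d pt x).
have rho00 : 0 < rho0 by rewrite lt_min r10 dptx.
have hgen : forall J : {set 'I_(p + q)}, [forall k in J, `[< y k <> x >]] ->
    0 < `|\sum_(k in J) a k - \sum_(k < p + q | `[< y k = x >]) a k|.
  move=> J /forallP hJ.
  have hJ' k : k \in J -> y k <> x.
    by move=> kJ; move: (hJ k); rewrite kJ /= => /asboolP.
  have e1 : \sum_(k in J) a k = \sum_(k < p | lshift q k \in J) a0 k
      + t * \sum_(i < q | rshift p i \in J) 2%:R ^+ i.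
    rewrite big_split_ord mulr_sumr; congr (_ + _); apply: eq_bigr.
      by move=> k _; case: (ea1 k).
    by move=> i _; case: (ea2 i).
  have e2 : \sum_(k < p + q | `[< y k = x >]) a k
      = \sum_(k < p | `[< y0 k = x >]) a0 k + t * 2%:R ^+ i0.
    rewrite big_split_ord; congr (_ + _).
      apply: eq_big => k; first by case: (ea1 k) => _ ->.
      by case: (ea1 k) => -> _.
    rewrite (big_pred1 i0); first by case: (ea2 i0).
    move=> i /=; case: (ea2 i) => _ ->.
    apply/idP/idP => [/asboolP hi|/eqP ->]; first by apply/eqP; exact: uniq_i.
    by apply/asboolP.
  have nJ : rshift p i0 \notin J.
    by apply/negP => h; apply: (hJ' _ h); case: (ea2 i0) => _ ->.
  pose P' := fun n => rshift p (insubd i0 n) \in J.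
  have hb := @bin q P' i0 (ltn_ord i0) (ltac:(by rewrite /P' valKd)).
  have sumeq : (\sum_(i < q | P' i) 2 ^ i = \sum_(i < q | rshift p i \in J) 2 ^ i)%N.
    by apply: eq_bigl => i; rewrite /P' valKd.
  have e3 : (\sum_(i < q | rshift p i \in J) 2 ^ i)%N%:R
      = \sum_(i < q | rshift p i \in J) 2%:R ^+ i :> R.
    by rewrite natr_sum; apply: eq_bigr => i _; rewrite natrX.
  pose A0 := \sum_(k < p | lshift q k \in J) a0 k - \sum_(k < p | `[< y0 k = x >]) a0 k.
  pose C0 : R := \sum_(i < q | rshift p i \in J) 2%:R ^+ i - 2%:R ^+ i0.
  have hC : C0 != 0.
    rewrite /C0 subr_eq0 -e3 -natrX eqr_nat -sumeq; exact: hb.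
  have -> : \sum_(k in J) a k - \sum_(k < p + q | `[< y k = x >]) a k = A0 + t * C0.
    by rewrite e1 e2 /A0 /C0; ring.
  have hA : A0 = A i0 J by rewrite /A /A0 nthx.
  have hCC : C0 = C i0 J by [].
  case: (eqVneq A0 0) => [->|hA0].
    by rewrite add0r normrM gtr0_norm // mulr_gt0 // normr_gt0.
  have hT := ht0 (i0, J); rewrite /= -hA -hCC in hT; have {}hT := hT hA0.
  have htc : t * `|C0| < `|A0|.
    apply: le_lt_trans (ler_wpM2r (normr_ge0 C0) tt0) _.
    apply: le_lt_trans (ler_wpM2r (normr_ge0 C0) hT) _.
    rewrite mulrAC ltr_pdivrMr ?ltr_wpDl ?ltr01 // ltr_pM2l ?normr_gt0 //.
    by rewrite ltrDl ltr01.
  apply: lt_le_trans (lerB_normD _ _).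
  by rewrite normrM (gtr0_norm t0') subr_gt0.
have [sig [sig0 hsig]] := fin_lb hgen.
pose eta := Num.min e rho0.
have eta0 : 0 < eta by rewrite lt_min e0 rho00.
pose c := eta / (p + q).+1%:R * sig.
have c0 : 0 < c by rewrite mulr_gt0 // divr_gt0 // ltr0n.
exists (Num.Def.trunc (c^-1)) => // j hj /=.
rewrite sub0r normrN ger0_norm ?d_ge0 //.
case: (ltP (d (iter (nseq j) f x) x) eta) => h.
  by apply: lt_le_trans h _; rewrite ge_min lexx.
exfalso.
have he1 : eta <= rho0 by rewrite /eta ge_min lexx orbT.
have he2 : rho0 <= d pt x by rewrite /rho0 ge_min lexx orbT.
have hc := @core R M d pt f Hm a y (p + q)%N x (nseq j) eta rho0 sig eta0 he1 he2.
have hy : forall k, (k < p + q)%N -> y k <> x -> rho0 <= d (y k) x.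
  move=> k hk hne2; apply: le_trans (hr1 (Ordinal hk) _); first by rewrite /rho0 ge_min lexx.
  by apply/asboolP.
have hJ : forall J : {set 'I_(p + q)}, (forall k, k \in J -> y k <> x) ->
     sig <= `| \sum_(k in J) a k - \sum_(k < p + q | `[< y k = x >]) a k |.
  move=> J hJ; apply: hsig; apply/forallP => k; apply/implyP => kJ.
  by apply/asboolP; exact: hJ k kJ.
have := le_lt_trans (hc hy hJ h) (hP j); rewrite lte_fin => hcj.
have : (j.+1%:R^-1 < c).
  rewrite -invf_plt ?posrE ?ltr0n //.
  apply: lt_le_trans (truncnS_gt _) _; rewrite ler_nat ltnS //.
by move=> h2; have := lt_trans hcj h2; rewrite ltxx.
Qed.
End Main.

Unset Implicit Arguments.

Theorem proposition3p2 (R : realType) (M : Type) (d : M -> M -> R) (pt : M)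
  (f : M -> M) :
  is_metric d -> lip0_self d pt f ->
  nonempty_interior_in_free d pt (rec_fhat d pt f) ->
  (forall N : set M, finite_set N -> N !=set0 ->
     exists n : nat -> nat, {homo n : i j / (i < j)%N >-> (i < j)%N} /\
       forall x, N x -> (fun j => d (iter (n j) f x) x) @ \oo --> 0)
  /\ recM d f = setT.
Proof.
move=> Hm Hf Hint.
have P1 := part1 Hm Hf Hint.
split => //.
apply/seteqP; split => // x _.
have [n [hom hc]] := P1 [set x] (finite_set1 x) (ltac:(by exists x)).
rewrite /recM /=.
apply: (einf_from_sub (v := fun k => d x (iter k f x)) (n := n)) => //.
  by move=> k; exact: d_ge0.
have -> : (fun j => d x (iter (n j) f x)) = (fun j => d (iter (n j) f x) x).
  by apply: funext => j; rewrite d_sym.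
exact: hc.
Qed.
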